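(* Let $E$ be a spectral set in a FTvN system $(\mathcal V,\mathcal W,\lambda)$. Then: (a) $\overline{E}$, $E^\circ$ and $\partial(E)$ are spectral. (b) If $\mathcal V$ is a Hilbert space, then $\overline{\operatorname{conv}(E)}$ is spectral. (c) If $\mathcal V$ is finite dimensional, then $\operatorname{conv}(E)$ is spectral; additionally, the convex cone generated by $E$ is spectral. (d) If $\mathcal V$ is a Hilbert space, then $E^p$ is spectral. In particular, if $\mathcal V$ is a Hilbert space and $S$ is a spectral set which is also a linear subspace of $\mathcal V$, then $S^\perp$ is spectral. (e) If $\mathcal V$ is a Hilbert space, then the sum of two compact convex spectral sets in $\mathcal V$ is spectral. (f) If $\mathcal V$ is finite dimensional, then the sum of two convex spectral sets is spectral.
   Context: A Fan-Theobald-von Neumann (FTvN) system is a triple $(\mathcal V,\mathcal W,\lambda)$ where $\mathcal V,\mathcal W$ are real inner product spaces and $\lambda:\mathcal V\to\mathcal W$ is a map such that: (A1) $\|\lambda(x)\|=\|x\|$ for all $x$; (A2) $\langle x,y\rangle\le\langle\lambda(x),\lambda(y)\rangle$ for all $x,y$; (A3) for every $c\in\mathcal V$ and $q\in\lambda(\mathcal V)$ there exists $x\in\mathcal V$ with $\lambda(x)=q$ and $\langle c,x\rangle=\langle\lambda(c),\lambda(x)\rangle$. The $\lambda$-orbit of $u$ is $[u]=\{x:\lambda(x)=\lambda(u)\}$. A set $E\subseteq\mathcal V$ is spectral if $E=\lambda^{-1}(Q)$ for some $Q\subseteq\mathcal W$, equivalently $x\in E\Rightarrow[x]\subseteq E$.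 $\overline{E}$, $E^\circ$, $\partial(E)$, $S^\perp$ denote closure, interior, boundary, orthogonal complement; $E^p=\{y\in\mathcal V:\langle y,x\rangle\le0\ \forall x\in E\}$ is the polar cone of $E$. *)

(* Defs.v *)
From HB Require Import structures.
From mathcomp Require Import all_boot all_order all_algebra.
From mathcomp Require Import all_classical all_reals all_analysis.
Set Implicit Arguments. Unset Strict Implicit. Unset Printing Implicit Defensive.
Import Order.TTheory GRing.Theory Num.Theory.
Import numFieldNormedType.Exports.
Local Open Scope classical_set_scope.
Local Open Scope ring_scope.

Definition inner_product (R : realType) (V : normedModType R)
  (ip : V -> V -> R) : Prop :=
  [/\ (forall x y, ip x y = ip y x),
      (forall (a : R) (x y z : V), ip (a *: x + y) z = a * ip x z + ip y z)
    & (forall x, ip x x = `|x| ^+ 2)].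

(* Fan-Theobald-von Neumann system (A1)-(A3). *)
Definition FTvN (R : realType) (V W : normedModType R)
  (ipV : V -> V -> R) (ipW : W -> W -> R) (lam : V -> W) : Prop :=
  [/\ (forall x, `|lam x| = `|x|),
      (forall x y, ipV x y <= ipW (lam x) (lam y))
    & (forall (c : V) (q : W), (exists u, lam u = q) ->
         exists x, lam x = q /\ ipV c x = ipW (lam c) (lam x))].

Definition spectral (R : realType) (V W : normedModType R) (lam : V -> W)
  (E : set V) : Prop := exists Q : set W, E = lam @^-1` Q.

Definition boundary (T : topologicalType) (E : set T) : set T :=
  closure E `\` interior E.

Definition is_convex (R : realType) (V : normedModType R) (A : set V) : Prop :=
  forall (x y : V) (t : R), 0 <= t -> t <= 1 -> A x -> A y ->
    A (t *: x + (1 - t) *: y).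

Definition convex_hull (R : realType) (V : normedModType R) (E : set V) : set V :=
  smallest (@is_convex R V) E.

Definition convex_cone (R : realType) (V : normedModType R) (C : set V) : Prop :=
  forall (x y : V) (a b : R), 0 <= a -> 0 <= b -> C x -> C y ->
    C (a *: x + b *: y).

Definition conic_hull (R : realType) (V : normedModType R) (E : set V) : set V :=
  smallest (@convex_cone R V) E.

Definition polar (R : realType) (V : normedModType R) (ip : V -> V -> R)
  (E : set V) : set V := [set y | forall x, E x -> ip y x <= 0].

Definition orth (R : realType) (V : normedModType R) (ip : V -> V -> R)
  (S : set V) : set V := [set y | forall x, S x -> ip y x = 0].

Definition linear_subspace (R : realType) (V : normedModType R) (S : set V) : Prop :=
  S 0 /\ forall (a : R) (x y : V), S x -> S y -> S (a *: x + y).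

Definition minkowski_sum (R : realType) (V : normedModType R) (A B : set V) : set V :=
  [set z | exists x y, A x /\ B y /\ z = x + y].

Definition hilbert (R : realType) (V : normedModType R) : Prop :=
  forall F : set_system V, ProperFilter F -> cauchy F -> cvg F.

Definition finite_dim (R : realType) (V : normedModType R) : Prop :=
  exists (n : nat) (b : 'I_n -> V), forall x : V,
    exists c : 'I_n -> R, x = \sum_(i < n) c i *: b i.

(* Main.v *)
Require Import Defs.
From HB Require Import structures.
From mathcomp Require Import all_boot all_order all_algebra.
From mathcomp Require Import all_classical all_reals all_analysis.
From mathcomp Require Import ring lra.
Set Implicit Arguments. Unset Strict Implicit. Unset Printing Implicit Defensive.
Import Order.TTheory GRing.Theory Num.Theory.
Import numFieldNormedType.Exports.
Local Open Scope classical_set_scope.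
Local Open Scope ring_scope.


Section IP.
Variables (R : realType) (V : normedModType R) (ip : V -> V -> R).
Hypothesis hV : inner_product ip.

Lemma ipC x y : ip x y = ip y x. Proof. by case: hV. Qed.
Lemma ipxx x : ip x x = `|x| ^+ 2. Proof. by case: hV. Qed.
Lemma ipL a x y z : ip (a *: x + y) z = a * ip x z + ip y z. Proof. by case: hV. Qed.
Lemma ip0l z : ip 0 z = 0.
Proof.
have := ipL 1 0 0 z; rewrite scale1r addr0 mul1r => h. lra.
Qed.
Lemma ipDl x y z : ip (x + y) z = ip x z + ip y z.
Proof. by rewrite -{1}(scale1r x) ipL mul1r. Qed.
Lemma ipZl a x z : ip (a *: x) z = a * ip x z.
Proof. by rewrite -(addr0 (a *: x)) ipL ip0l addr0. Qed.
Lemma ipNl x z : ip (- x) z = - ip x z.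
Proof. by rewrite -scaleN1r ipZl mulN1r. Qed.
Lemma ipBl x y z : ip (x - y) z = ip x z - ip y z.
Proof. by rewrite ipDl ipNl. Qed.
Lemma ip0r z : ip z 0 = 0. Proof. by rewrite ipC ip0l. Qed.
Lemma ipDr x y z : ip z (x + y) = ip z x + ip z y.
Proof. by rewrite ipC ipDl !(ipC z). Qed.
Lemma ipZr a x z : ip z (a *: x) = a * ip z x.
Proof. by rewrite ipC ipZl ipC. Qed.
Lemma ipNr x z : ip z (- x) = - ip z x.
Proof. by rewrite ipC ipNl ipC. Qed.
Lemma ipBr x y z : ip z (x - y) = ip z x - ip z y.
Proof. by rewrite ipDr ipNr. Qed.

Lemma normB2 x y : `|x - y| ^+ 2 = `|x| ^+ 2 - 2 * ip x y + `|y| ^+ 2.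
Proof.
rewrite -!ipxx ipBl !ipBr (ipC y x); ring.
Qed.
Lemma normD2 x y : `|x + y| ^+ 2 = `|x| ^+ 2 + 2 * ip x y + `|y| ^+ 2.
Proof.
rewrite -!ipxx ipDl !ipDr (ipC y x); ring.
Qed.

Lemma CS x y : ip x y <= `|x| * `|y|.
Proof.
have [x0|xn0] := eqVneq `|x| 0.
  by move/normr0_eq0: x0 => ->; rewrite ip0l normr0 mul0r.
have [y0|yn0] := eqVneq `|y| 0.
  by move/normr0_eq0: y0 => ->; rewrite ip0r normr0 mulr0.
have hx : 0 < `|x| by rewrite lt_def xn0 normr_ge0.
have hy : 0 < `|y| by rewrite lt_def yn0 normr_ge0.
have := sqr_ge0 (Num.norm (`|y| *: x - `|x| *: y)).
rewrite normB2 !normrZ !ger0_norm ?normr_ge0 // ipZl ipZr.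
move=> h.
have hxy : 0 < `|x| * `|y| by rewrite mulr_gt0.
rewrite -subr_ge0.
have : 0 <= (`|x| * `|y|) * (2 * (`|x| * `|y| - ip x y)).
  by move: h; congr (_ <= _); ring.
by rewrite pmulr_rge0 // pmulr_rge0.
Qed.

End IP.


Lemma nbhs_nE (R : realType) (V : normedModType R) (x : V) (B : set V) :
  nbhs x B <-> exists2 e : R, 0 < e & forall y, `|x - y| < e -> B y.
Proof.
rewrite -nbhs_nbhs_norm; split=> [[e e0 h]|[e e0 h]]; exists e => //.
Qed.

Lemma sqr_le_norm (R : realType) (a b : R) : 0 <= a -> 0 <= b ->
  a ^+ 2 <= b ^+ 2 -> a <= b.
Proof. by move=> ha hb; rewrite ler_sqr // nnegrE. Qed.

Definition oclosed (R : realType) (V W : normedModType R) (lam : V -> W)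
  (E : set V) := forall x y, E x -> lam y = lam x -> E y.

Lemma spectralP (R : realType) (V W : normedModType R) (lam : V -> W)
  (E : set V) : spectral lam E <-> oclosed lam E.
Proof.
split=> [[Q ->] x y /= Qx ->//|h].
exists (lam @` E); apply/seteqP; split=> [x Ex|x [y Ey hy]]; first by exists x.
exact: h Ey _.
Qed.

Section FT.
Variables (R : realType) (V W : normedModType R)
  (ipV : V -> V -> R) (ipW : W -> W -> R) (lam : V -> W).
Hypotheses (hV : inner_product ipV) (hW : inner_product ipW)
  (hF : FTvN ipV ipW lam).

Lemma lam_norm x : `|lam x| = `|x|. Proof. by case: hF. Qed.
Lemma lamA2 x y : ipV x y <= ipW (lam x) (lam y). Proof. by case: hF. Qed.
Lemma lamA3 c u : exists x, lam x = lam u /\ ipV c x = ipW (lam c) (lam x).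
Proof. by case: hF => _ _ h; apply: h; exists u. Qed.

Lemma lam_lip x y : `|lam x - lam y| <= `|x - y|.
Proof.
apply: sqr_le_norm => //.
rewrite (normB2 hV) (normB2 hW) !lam_norm.
have := lamA2 x y; lra.
Qed.

Lemma transfer x x' y : lam y = lam x ->
  exists y', lam y' = lam x' /\ `|y' - y| <= `|x' - x|.
Proof.
move=> hyx; have [y' [h1 h2]] := lamA3 y x'.
exists y'; split => //; apply: (le_trans _ (lam_lip x' x)).
apply: sqr_le_norm => //.
rewrite (normB2 hV) (normB2 hW) (ipC hV) h2 h1 hyx (ipC hW).
by rewrite -!lam_norm h1 hyx.
Qed.

Lemma lam_eq0 x : lam x = lam 0 -> x = 0.
Proof.
move=> h; apply/normr0_eq0; rewrite -lam_norm h lam_norm normr0 //.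
Qed.

Lemma lamZ t x : 0 <= t -> lam (t *: x) = t *: lam x.
Proof.
move=> t0; apply/eqP; rewrite -subr_eq0 -normr_eq0; apply/eqP.
apply/eqP; rewrite -sqrf_eq0; apply/eqP/le_anti/andP; split; last exact: sqr_ge0.
rewrite (normB2 hW) normrZ (ger0_norm t0) !lam_norm normrZ (ger0_norm t0).
rewrite (ipZr hW).
have := lamA2 (t *: x) x; rewrite (ipZl hV) (ipxx hV) => h.
have : t * (t * `|x| ^+ 2) <= t * ipW (lam (t *: x)) (lam x) by rewrite ler_wpM2l.
lra.
Qed.

Lemma closure_oclosed E : oclosed lam E -> oclosed lam (closure E).
Proof.
move=> hE x y cx hyx B /nbhs_nE [e e0 hB].
have /cx [x' [Ex' bx']] : nbhs x (fun z => `|x - z| < e).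
  by apply/nbhs_nE; exists e.
have [y' [h1 h2]] := transfer x' hyx.
exists y'; split; first exact: hE Ex' h1.
apply: hB; rewrite distrC; apply: le_lt_trans h2 _; by rewrite distrC.
Qed.

Lemma interior_oclosed E : oclosed lam E -> oclosed lam (interior E).
Proof.
move=> hE x y /nbhs_nE [e e0 hB] hyx; apply/nbhs_nE; exists e => // y'' hy''.
have [x'' [h1 h2]] := transfer y'' (esym hyx).
apply: (hE x'') (esym h1); apply: hB.
by rewrite distrC; apply: le_lt_trans h2 _; rewrite distrC.
Qed.

Lemma boundary_oclosed E : oclosed lam E -> oclosed lam (boundary E).
Proof.
move=> hE x y [cx ix] hyx; split; first exact: closure_oclosed cx hyx.
by move=> iy; apply: ix; apply: interior_oclosed iy (esym hyx).
Qed.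

Lemma polar_oclosed E : oclosed lam E -> oclosed lam (polar ipV E).
Proof.
move=> hE y z py hzy x Ex.
have [x' [h1 h2]] := lamA3 y x.
apply: (le_trans (lamA2 z x)); rewrite hzy -h1 -h2.
exact: py (hE _ _ Ex h1).
Qed.

Lemma orth_oclosed S : oclosed lam S -> linear_subspace S ->
  oclosed lam (orth ipV S).
Proof.
move=> hS [S0 Slin] y z oy hzy x Sx.
have py : polar ipV S y by move=> w Sw; rewrite oy.
have pz := polar_oclosed hS py hzy.
have Snx : S (- x) by have := Slin (-1) x 0 Sx S0; rewrite scaleN1r addr0.
have := pz _ Sx; have := pz _ Snx; rewrite (ipNr hV); lra.
Qed.

End FT.


Section Convex.
Variables (R : realType) (V : normedModType R).

Lemma convex_hull_convex (E : set V) : is_convex (convex_hull E).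
Proof.
move=> x y t t0 t1 hx hy M [cM EM].
exact: cM (hx M (conj cM EM)) (hy M (conj cM EM)).
Qed.

Lemma convex_hull_sub (E F : set V) : is_convex F -> E `<=` F ->
  convex_hull E `<=` F.
Proof. by move=> cF EF; apply: smallest_sub. Qed.

Lemma sub_convex_hull (E : set V) : E `<=` convex_hull E.
Proof. exact: sub_smallest. Qed.

Lemma convex_hullS (E F : set V) : E `<=` F -> convex_hull E `<=` convex_hull F.
Proof.
move=> EF; apply: convex_hull_sub; first exact: convex_hull_convex.
by move=> x /EF; apply: sub_convex_hull.
Qed.

Lemma closure_convex (C : set V) : is_convex C -> is_convex (closure C).
Proof.
move=> cC x y t t0 t1 hx hy B /nbhs_nE [e e0 hB].
have /hx [x1 [Cx1 bx1]] : nbhs x (fun z => `|x - z| < e).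
  by apply/nbhs_nE; exists e.
have /hy [y1 [Cy1 by1]] : nbhs y (fun z => `|y - z| < e).
  by apply/nbhs_nE; exists e.
exists (t *: x1 + (1 - t) *: y1); split; first exact: cC.
apply: hB.
have -> : t *: x + (1 - t) *: y - (t *: x1 + (1 - t) *: y1) =
   t *: (x - x1) + (1 - t) *: (y - y1).
  by rewrite !scalerBr; rewrite addrACA opprD.
apply: (le_lt_trans (ler_normD _ _)); rewrite !normrZ !ger0_norm ?subr_ge0 //.
have h1 : t * `|x - x1| <= t * e by rewrite ler_wpM2l // ltW.
have h2 : (1 - t) * `|y - y1| <= (1 - t) * e by rewrite ler_wpM2l ?subr_ge0 // ltW.
have [->|tn0] := eqVneq t 0.
  by rewrite mul0r add0r subr0 mul1r.
have t0' : 0 < t by rewrite lt_def tn0 t0.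
have h1' : t * `|x - x1| < t * e by rewrite ltr_pM2l.
lra.
Qed.

Lemma minkowski_convex (A B : set V) : is_convex A -> is_convex B ->
  is_convex (minkowski_sum A B).
Proof.
move=> cA cB z1 z2 t t0 t1 [x1 [y1 [Ax1 [By1 ->]]]] [x2 [y2 [Ax2 [By2 ->]]]].
exists (t *: x1 + (1 - t) *: x2), (t *: y1 + (1 - t) *: y2); split; first exact: cA.
split; first exact: cB.
by rewrite !scalerDr addrACA.
Qed.

End Convex.


Definition is_proj (R : realType) (V : normedModType R) (C : set V) z p :=
  C p /\ forall c, C c -> `|z - p| <= `|z - c|.

Section Main.
Variables (R : realType) (V W : normedModType R)
  (ipV : V -> V -> R) (ipW : W -> W -> R) (lam : V -> W).
Hypotheses (hV : inner_product ipV) (hW : inner_product ipW)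
  (hF : FTvN ipV ipW lam).

Definition SS0 (C : set V) := forall a a', lam a' = lam a -> forall c, C c ->
  exists c', C c' /\ ipV a' c <= ipV a c'.
Definition SSe (C : set V) := forall a a', lam a' = lam a -> forall c, C c ->
  forall e, 0 < e -> exists c', C c' /\ ipV a' c <= ipV a c' + e.

Lemma SS0e C : SS0 C -> SSe C.
Proof.
move=> h a a' ha c Cc e e0; have [c' [Cc' h']] := h a a' ha c Cc.
by exists c'; split => //; lra.
Qed.

Lemma SS0_oclosed C : oclosed lam C -> SS0 C.
Proof.
move=> hC a a' ha c Cc; have [c' [h1 h2]] := lamA3 hF a c.
exists c'; split; first exact: hC Cc h1.
rewrite h2 h1 -ha. have := lamA2 hF a' c. done.
Qed.

Lemma SS0_hull E : oclosed lam E -> SS0 (convex_hull E).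
Proof.
move=> hE a a' ha.
suff : convex_hull E `<=` [set c | exists c', convex_hull E c' /\ ipV a' c <= ipV a c'].
  by move=> h c /h.
apply: convex_hull_sub.
  move=> x y t t0 t1 [x' [hx' lx]] [y' [hy' ly]].
  exists (t *: x' + (1 - t) *: y'); split; first exact: convex_hull_convex.
  rewrite !(ipDr hV) !(ipZr hV).
  have h1 : t * ipV a' x <= t * ipV a x' by rewrite ler_wpM2l.
  have h2 : (1 - t) * ipV a' y <= (1 - t) * ipV a y' by rewrite ler_wpM2l ?subr_ge0.
  lra.
move=> x Ex; have [c' [h1 h2]] := SS0_oclosed hE ha Ex.
by exists c'; split => //; apply: sub_convex_hull.
Qed.

Lemma SS0_sum A B : SS0 A -> SS0 B -> SS0 (minkowski_sum A B).
Proof.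
move=> hA hB a a' ha _ [x [y [Ax [By ->]]]].
have [x' [h1 h2]] := hA a a' ha x Ax; have [y' [h3 h4]] := hB a a' ha y By.
exists (x' + y'); split; first by exists x', y'.
rewrite !(ipDr hV); lra.
Qed.

Lemma SSe_closure C : SSe C -> SSe (closure C).
Proof.
move=> hC a a' ha c cc e e0.
pose d := e / 2 / (`|a'| + 1).
have d0 : 0 < d by rewrite /d divr_gt0 // ?divr_gt0 // ltr_pwDr.
have /cc [c1 [Cc1 bc1]] : nbhs c (fun z => `|c - z| < d).
  by apply/nbhs_nE; exists d.
have [c' [h1 h2]] := hC a a' ha c1 Cc1 (e / 2) (divr_gt0 e0 (ltr0Sn _ 1)).
exists c'; split; first exact: subset_closure.
have -> : ipV a' c = ipV a' c1 + ipV a' (c - c1) by rewrite (ipBr hV); ring.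
have h3 := CS hV a' (c - c1).
have h4 : `|a'| * `|c - c1| <= `|a'| * d by rewrite ler_wpM2l // ltW.
have h5 : `|a'| * d <= e / 2.
  rewrite /d mulrA ler_pdivrMr ?ltr_pwDr // mulrDr mulr1 mulrC lerDl; apply: divr_ge0 => //; exact: ltW.
clear -h2 h3 h4 h5; lra.
Qed.

Lemma varineq C z p : is_convex C -> is_proj C z p ->
  forall c, C c -> ipV (z - p) (c - p) <= 0.
Proof.
move=> cC [Cp hp] c Cc; rewrite leNgt; apply/negP => g0.
set g := ipV (z - p) (c - p) in g0.
set N := `|c - p| ^+ 2.
have N0 : 0 <= N by apply: sqr_ge0.
pose t := g / (g + N).
have gN : 0 < g + N by lra.
have t0 : 0 <= t by rewrite divr_ge0 // ltW.
have t1 : t <= 1 by rewrite /t ler_pdivrMr // mul1r; lra.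
have := hp _ (cC c p t t0 t1 Cc Cp).
have -> : z - (t *: c + (1 - t) *: p) = (z - p) - t *: (c - p).
  by rewrite scalerBl scale1r scalerBr !opprD !opprK !addrA; congr (_ + _);
     exact: addrAC.
move=> h0.
have : `|z - p| ^+ 2 <= `|z - p - t *: (c - p)| ^+ 2 by rewrite ler_sqr ?nnegrE.
rewrite [X in _ <= X](normB2 hV) (ipZr hV) normrZ exprMn ger0_norm //.
rewrite -/N -/g => h.
have h' : t * (2 * g) <= t * (t * N) by move: h; rewrite expr2; nra.
have tp : 0 < t by rewrite divr_gt0.
rewrite ler_pM2l // /t in h'.
move: h'; rewrite mulrAC ler_pdivlMr // => h'.
nra.
Qed.

Lemma main_spec C z z' : is_convex C -> SSe C -> C z -> lam z' = lam z ->
  (exists p, is_proj C z' p) -> C z'.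
Proof.
move=> cC sC Cz hz [p pp]; have [Cp hp] := pp.
apply: contrapT => nCz'.
set a := z' - p.
have a0 : a != 0 by rewrite subr_eq0; apply/eqP => h; apply: nCz'; rewrite h.
have na0 : 0 < `|a| ^+ 2 by rewrite exprn_gt0 // normr_gt0.
have [a' [h1 h2]] := lamA3 hF z a.
have [c' [Cc' h3]] := sC a a' h1 z Cz _ (divr_gt0 na0 (ltr0Sn _ 1)).
have h4 := varineq cC pp Cc'.
have h5 : ipV a z' <= ipV a' z.
  rewrite (ipC hV a' z) h2 h1 -hz (ipC hW); have := lamA2 hF a z'; done.
have h6 : ipV a z' = ipV a p + `|a| ^+ 2.
  by rewrite -(ipxx hV) -(ipDr hV) [p + _]addrC /a subrK.
rewrite (ipBr hV) in h4.
rewrite -/a in h4; clear -h3 h4 h5 h6 na0; lra.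
Qed.

End Main.


Lemma dist_continuous (R : realType) (V : normedModType R) (z : V) :
  continuous (fun c : V => `|z - c|).
Proof.
have h : continuous (fun c : V => z - c).
  by move=> c; apply: cvgB; [exact: cvg_cst|exact: cvg_id].
move=> c; exact: (continuous_comp (h c) (@norm_continuous _ _ (z - c))).
Qed.

Lemma proj_compact (R : realType) (V : normedModType R) (C : set V) z :
  C !=set0 -> compact C -> exists p, is_proj C z p.
Proof.
move=> C0 cC.
have [p pC hp] := compact_EVT_min C0 cC
  (continuous_subspaceT (@dist_continuous R V z)).
exists p; split; first by rewrite inE in pC.
by move=> c Cc; apply: hp; rewrite inE.
Qed.

Section Complete.
Variables (R : realType) (V : normedModType R) (ipV : V -> V -> R).
Hypothesis hV : inner_product ipV.

Lemma midpoint_id (z c1 c2 : V) :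
  (z - c1) + (z - c2) = 2 *: (z - (2^-1 *: c1 + (1 - 2^-1) *: c2)).
Proof.
have h2 : (2 : R) != 0 by rewrite pnatr_eq0.
have e1 : 1 - 2^-1 = 2^-1 :> R by rewrite {1}(splitr 1) mul1r addrK.
rewrite e1 scalerBr scalerDr !scalerA mulfV // scale1r.
by rewrite scaler_nat mulr2n opprD addrACA scale1r.
Qed.

Lemma parallelogram (u v : V) :
  `|u + v| ^+ 2 + `|u - v| ^+ 2 = 2 * `|u| ^+ 2 + 2 * `|v| ^+ 2.
Proof. rewrite (normD2 hV) (normB2 hV); ring. Qed.

Lemma proj_complete (C : set V) z : hilbert V -> closed C -> is_convex C ->
  C !=set0 -> exists p, is_proj C z p.
Proof.
move=> hH clC cC [c0 Cc0].
pose S := [set r | exists2 c, C c & r = `|z - c|].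
have S0 : S !=set0 by exists `|z - c0|; exists c0.
have Slb : has_lbound S by exists 0 => r [c _ ->].
pose d := inf S.
have d0 : 0 <= d by apply: lb_le_inf => // r [c _ ->].
have dle c : C c -> d <= `|z - c| by move=> Cc; apply: ge_inf => //; exists c.
have dadh e : 0 < e -> exists2 c, C c & `|z - c| < d + e.
  move=> e0; have [_ [c Cc ->] h] := inf_adherent e0 (conj S0 Slb).
  by exists c.
pose A (de : R) := [set c | C c /\ `|z - c| ^+ 2 < d ^+ 2 + de].
have Ane de : 0 < de -> A de !=set0.
  move=> de0; pose e := de / (2 * d + 1 + de).
  have den : 0 < 2 * d + 1 + de by lra.
  have e0 : 0 < e by rewrite divr_gt0.
  have e1 : e <= 1 by rewrite ler_pdivrMr // mul1r; lra.
  have e2 : e * (2 * d + 1) <= de.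
    rewrite /e mulrAC ler_pdivrMr //; nra.
  have [c Cc hc] := dadh e e0; exists c; split => //.
  have hc0 : 0 <= `|z - c| by [].
  have : `|z - c| ^+ 2 < (d + e) ^+ 2 by rewrite ltr_sqr ?nnegrE //; lra.
  nra.
pose F := filter_from [set de : R | 0 < de] A.
have FF : Filter F.
  apply: filter_from_filter; first by exists 1 => /=.
  move=> i j /= i0 j0; exists (Num.min i j); first by rewrite /= lt_min i0 j0.
  move=> c [Cc hc]; split; split => //.
    by apply: (lt_le_trans hc); rewrite lerD2l ge_min lexx.
  by apply: (lt_le_trans hc); rewrite lerD2l ge_min lexx orbT.
have PF : ProperFilter F by apply: filter_from_proper => // i /Ane.
have diam de c1 c2 : A de c1 -> A de c2 -> `|c1 - c2| ^+ 2 < 4 * de.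
  move=> [C1 h1] [C2 h2].
  have Cm' : C (2^-1 *: c1 + (1 - 2^-1) *: c2).
    apply: cC C1 C2; first by rewrite invr_ge0.
    by rewrite invf_le1 // ler1n.
  have hm := dle _ Cm'.
  have hm2 : d ^+ 2 <= `|z - (2^-1 *: c1 + (1 - 2^-1) *: c2)| ^+ 2.
    by rewrite ler_sqr ?nnegrE.
  have := parallelogram (z - c1) (z - c2).
  rewrite midpoint_id normrZ exprMn (ger0_norm (ler0n _ 2)).
  have -> : z - c1 - (z - c2) = - (c1 - c2).
    by rewrite !opprB addrC addrA subrK.
  rewrite normrN => h.
  have e4 : (2 : R) ^+ 2 = 4 by rewrite expr2 -natrM.
  rewrite e4 in h; nra.
have cF : cauchy F.
  apply: cauchy_exP => e e0.
  have e20 : 0 < e ^+ 2 / 4 by rewrite divr_gt0 // exprn_gt0.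
  have [x Ax] := Ane _ e20.
  exists x; exists (e ^+ 2 / 4) => // c Ac.
  rewrite -ball_normE /=.
  have := diam _ _ _ Ax Ac; rewrite mulrC mulfVK ?pnatr_eq0 // => h.
  by rewrite -ltr_sqr ?nnegrE // ltW.
have cvF := hH F PF cF.
set p := lim F in cvF.
have Cp : C p.
  apply: clC => B /cvF FB.
  have FA1 : F (A 1) by exists 1 => //=; rewrite ltr01.
  have [y [Ay By]] := filter_ex (filterI FB FA1).
  by exists y; split => //; case: By.
exists p; split => // c Cc; apply: le_trans (dle _ Cc).
rewrite leNgt; apply/negP => hlt.
set g := `|z - p| - d.
have g0 : 0 < g by rewrite subr_gt0.
pose de := (d + g / 2) ^+ 2 - d ^+ 2.
have de0 : 0 < de.
  rewrite subr_gt0 ltr_sqr ?nnegrE //; first by rewrite ltrDl divr_gt0.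
  by rewrite addr_ge0 // divr_ge0 // ltW.
have Fb : F (ball p (g / 2)).
  by apply: cvF; apply: nbhsx_ballx; rewrite divr_gt0.
have FAde : F (A de) by exists de.
have [y [[Cy hy] byp]] := filter_ex (filterI FAde Fb).
move: byp; rewrite -ball_normE /= => byp.
have hy' : `|z - y| < d + g / 2.
  rewrite -ltr_sqr ?nnegrE //; first by rewrite /de in hy; lra.
  by rewrite addr_ge0 // divr_ge0 // ltW.
have := ler_distD y z p; rewrite (distrC y p) /g in hy' *.
rewrite /g in byp => h; clear -hy' byp h; lra.
Qed.

End Complete.


Lemma entry_le_norm (R : realType) n (c : 'rV[R]_n) i : `|c ord0 i| <= `|c|.
Proof.
have /mapP[j Hj ->] : `|c ord0 i| \in [seq `|c x.1 x.2| | x : 'I_1 * 'I_n].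
  by apply/mapP; exists (ord0, i) => //=; rewrite mem_enum.
by rewrite [leRHS]mx_normrE; apply/bigmax_geP; right => /=; exists j.
Qed.

Section FD.
Variables (R : realType) (V : normedModType R) (n : nat) (b : 'I_n -> V).

Definition phi (c : 'rV[R]_n) : V := \sum_(i < n) c ord0 i *: b i.

Lemma phiD c d : phi (c + d) = phi c + phi d.
Proof.
by rewrite /phi -big_split /=; apply: eq_bigr => i _; rewrite mxE scalerDl.
Qed.
Lemma phiZ k c : phi (k *: c) = k *: phi c.
Proof.
by rewrite /phi scaler_sumr; apply: eq_bigr => i _; rewrite mxE scalerA.
Qed.
Lemma phi0 : phi 0 = 0.
Proof. by rewrite -(scale0r 0) phiZ scale0r. Qed.
Lemma phiN c : phi (- c) = - phi c.
Proof. by rewrite -scaleN1r phiZ scaleN1r. Qed.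
Lemma phiB c d : phi (c - d) = phi c - phi d.
Proof. by rewrite phiD phiN. Qed.

Definition Lb := \sum_(i < n) `|b i|.

Lemma phi_le c : `|phi c| <= `|c| * Lb.
Proof.
apply: (le_trans (ler_norm_sum _ _ _)); rewrite /Lb mulr_sumr.
apply: ler_sum => i _; rewrite normrZ ler_wpM2r //; exact: entry_le_norm.
Qed.

Lemma phi_continuous : continuous phi.
Proof.
have Lb0 : 0 <= Lb by apply: sumr_ge0.
move=> c B /nbhs_nE [e e0 hB]; apply/nbhs_nE.
exists (e / (Lb + 1)); first by rewrite divr_gt0 // ltr_wpDl.
move=> d hd; apply: hB; rewrite -phiB; apply: (le_lt_trans (phi_le _)).
move: hd; rewrite ltr_pdivlMr ?ltr_wpDl // => h.
apply: le_lt_trans h; rewrite ler_wpM2l //; lra.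
Qed.

End FD.

Lemma phi_lower (R : realType) (V : normedModType R) n (b : 'I_n -> V) :
  (forall c, phi b c = 0 -> c = 0) ->
  exists2 m : R, 0 < m & forall c, m * `|c| <= `|phi b c|.
Proof.
move=> indep.
case: n b indep => [|n'] b' indep.
  by exists 1 => // c; rewrite (thinmx0 c) normr0 mulr0.
pose S := [set c : 'rV[R]_n'.+1 | `|c| = 1].
have S0 : S !=set0.
  pose c1 : 'rV[R]_n'.+1 := const_mx 1.
  have c1n0 : `|c1| != 0.
    rewrite normr_eq0; apply/eqP => /matrixP/(_ ord0 ord0).
    by rewrite !mxE => /eqP; rewrite oner_eq0.
  exists (`|c1|^-1 *: c1); rewrite /S /= normrZ normfV normr_id mulVf //.
have cS : compact S.
  apply: bounded_closed_compact.
    rewrite /= /bounded_near; near=> M => x Sx; rewrite /= Sx; near: M; apply: nbhs_pinfty_ge.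
    by rewrite realE ler01.
  have cl : closed ((fun c : 'rV[R]_n'.+1 => `|c|) @^-1` [set x : R | x = 1]).
    apply: preimage_closed; last exact: closed_eq.
    by move=> x _; exact: norm_continuous.
  exact: cl.
have cf : continuous (fun c : 'rV[R]_n'.+1 => `|phi b' c|).
  move=> c; exact: (continuous_comp (@phi_continuous R V n'.+1 b' c)
    (@norm_continuous _ _ (phi b' c))).
have [c0 Sc0 hc0] := compact_EVT_min S0 cS (continuous_subspaceT cf).
rewrite inE /S /= in Sc0.
exists `|phi b' c0|.
  rewrite normr_gt0; apply/eqP => /indep h.
  by move: Sc0; rewrite h normr0 => /eqP; rewrite eq_sym oner_eq0.
move=> c; have [->|cn0] := eqVneq c 0; first by rewrite normr0 mulr0.
have nc0 : 0 < `|c| by rewrite normr_gt0.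
have := hc0 (`|c|^-1 *: c).
rewrite inE /S /= normrZ normfV normr_id mulVf ?gt_eqF // => /(_ erefl).
rewrite phiZ normrZ normfV normr_id ler_pdivlMl //.
by rewrite mulrC.
Unshelve. all: by end_near. Qed.


Lemma HB_compact (R : realType) (V : normedModType R) n (b : 'I_n -> V) :
  (forall x, exists c, phi b c = x) -> (forall c, phi b c = 0 -> c = 0) ->
  forall A : set V, closed A -> (exists M, forall x, A x -> `|x| <= M) ->
  compact A.
Proof.
move=> sp indep A clA [M hM].
have [m m0 hm] := phi_lower indep.
have -> : A = phi b @` (phi b @^-1` A).
  apply/seteqP; split => [x Ax|x [c Ac <-] //].
  by have [c hc] := sp x; exists c => //; rewrite /= hc.
apply: continuous_compact; first exact/continuous_subspaceT/phi_continuous.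
apply: bounded_closed_compact.
  rewrite /= /bounded_near; near=> K => c /= Ac.
  have h1 := hm c; have h2 := hM _ Ac.
  have : `|c| <= M / m by rewrite ler_pdivlMr // mulrC; apply: le_trans h1 h2.
  move=> h; apply: le_trans h _; near: K; apply: nbhs_pinfty_ge.
  by rewrite num_real.
apply: preimage_closed => //; by move=> x _; exact: phi_continuous.
Unshelve. all: by end_near. Qed.

Lemma basis_exists (R : realType) (V : normedModType R) : finite_dim V ->
  exists n (b : 'I_n -> V), (forall x, exists c, phi b c = x) /\
    (forall c, phi b c = 0 -> c = 0).
Proof.
move=> [n [b hb]].
pose P k := exists b : 'I_k -> V, forall x, exists c, phi b c = x.
have ex : exists k, `[< P k >].
  exists n; apply/asboolP; exists b => x; have [c ->] := hb x.
  by exists (\row_i c i); apply: eq_bigr => i _; rewrite mxE.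
case: (ex_minnP ex) => k /asboolP [bk hk] kmin.
exists k, bk; split => // c hc.
apply/rowP => j; rewrite mxE; apply: contrapT => /eqP cj.
move: bk hk kmin c hc j cj; case: k => [|k'] bk hk kmin c hc j cj; first by case: j cj => m; case: m.
have : P k'.
  exists (fun i => bk (lift j i)) => x.
  have [d hd] := hk x.
  pose al := d ord0 j / c ord0 j.
  exists (\row_i (d ord0 (lift j i) - al * c ord0 (lift j i))).
  move: hd hc; rewrite /phi (bigD1_ord j) //= (bigD1_ord j) //= => hd hc.
  have hc' : \sum_(i < k') c ord0 (lift j i) *: bk (lift j i) =
      - (c ord0 j *: bk j) by apply/eqP; rewrite -subr_eq0 opprK addrC hc.
  transitivity (\sum_(i < k') d ord0 (lift j i) *: bk (lift j i) -
     al *: \sum_(i < k') c ord0 (lift j i) *: bk (lift j i)).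
    rewrite scaler_sumr -sumrB; apply: eq_bigr => i _.
    by rewrite mxE scalerBl scalerA.
  rewrite hc' scalerN opprK scalerA /al mulfVK //.
  by rewrite -hd addrC.
move/asboolP/kmin; by rewrite ltnn.
Qed.


Section Kseq.
Variables (R : realType) (V : normedModType R).

Definition cmb (p : R * (V * V)) : V := p.1 *: p.2.1 + (1 - p.1) *: p.2.2.

Lemma cmb_continuous : continuous cmb.
Proof.
move=> p.
have h1 : (fun q : R * (V * V) => q.1) @ p --> p.1 by exact: cvg_fst.
have h2 : (fun q : R * (V * V) => q.2) @ p --> p.2 by exact: cvg_snd.
have h21 : (fun q : R * (V * V) => q.2.1) @ p --> p.2.1.
  exact: (continuous_comp h2 (@cvg_fst _ _ (nbhs p.2.1) (nbhs p.2.2) _)).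
have h22 : (fun q : R * (V * V) => q.2.2) @ p --> p.2.2.
  exact: (continuous_comp h2 (@cvg_snd _ _ (nbhs p.2.1) (nbhs p.2.2) _)).
apply: cvgD; apply: cvgZ => //.
by apply: cvgB => //; exact: cvg_cst.
Qed.

Fixpoint Kseq (K : set V) (j : nat) : set V :=
  match j with
  | 0 => K
  | j'.+1 => cmb @` (`[0, 1] `*` (K `*` Kseq K j'))
  end.

Lemma Kseq_compact K j : compact K -> compact (Kseq K j).
Proof.
move=> cK; elim: j => [//|j IH] /=.
apply: continuous_compact; first exact/continuous_subspaceT/cmb_continuous.
apply: compact_setX; first exact: segment_compact.
exact: compact_setX.
Qed.

Lemma Kseq_conv K j : Kseq K j `<=` convex_hull K.
Proof.
elim: j => [|j IH] /=; first exact: sub_convex_hull.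
move=> _ [[t [x y]] [/= t01 [Kx Ky]] <-].
move: t01; rewrite /= in_itv /= => /andP [t0 t1].
apply: convex_hull_convex => //; first exact: sub_convex_hull.
exact: IH.
Qed.

Lemma K_Kseq K j : K `<=` Kseq K j.
Proof.
elim: j => [//|j IH] x Kx /=.
exists (1, (x, x)); first by split; [rewrite /= in_itv /= ler01 lexx| split => //; apply: IH].
by rewrite /cmb /= scale1r subrr scale0r addr0.
Qed.

Lemma Kseq_ne K j y : Kseq K j y -> exists x, K x.
Proof.
elim: j y => [|j IH] y /=; first by move=> Ky; exists y.
by move=> [[t [x z]] [_ [Kx _]] _]; exists x.
Qed.

Lemma Kseq_S K j : Kseq K j `<=` Kseq K j.+1.
Proof.
move=> y Ky; have [x Kx] := Kseq_ne Ky.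
exists (0, (x, y)); first by split; [rewrite /= in_itv /= ler01 lexx| split].
by rewrite /cmb /= scale0r add0r subr0 scale1r.
Qed.

Lemma Kseq_le K j k : (j <= k)%N -> Kseq K j `<=` Kseq K k.
Proof.
move=> /subnK <-; elim: (k - j)%N => [//|d IH].
by rewrite addSn; apply: subset_trans IH (@Kseq_S _ _).
Qed.

Definition comb (K : set V) m (P : V) := exists (t : 'I_m -> R) (x : 'I_m -> V),
  [/\ (forall i, 0 <= t i), \sum_i t i = 1, (forall i, K (x i)) &
      P = \sum_i t i *: x i].

Lemma comb_Kseq K m P : comb K m.+1 P -> Kseq K m P.
Proof.
elim: m P => [|m IH] P [t [x [t0 t1 Kx ->]]].
  by rewrite big_ord1; move: t1; rewrite big_ord1 => ->; rewrite scale1r.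
move: t1; rewrite big_ord_recl => t1.
rewrite big_ord_recl.
set s := \sum_(i < m.+1) t (lift ord0 i) in t1.
have s0 : 0 <= s by apply: sumr_ge0.
have [s_eq0|s_gt0] := eqVneq s 0.
  have tl0 i : t (lift ord0 i) = 0.
    by move/eqP: s_eq0; rewrite psumr_eq0 // => /allP /(_ i) /= /(_ (mem_index_enum _)) /eqP.
  rewrite big1 ?addr0; last by move=> i _; rewrite tl0 scale0r.
  move: t1; rewrite s_eq0 addr0 => ->; rewrite scale1r.
  exact: K_Kseq.
have sp : 0 < s by rewrite lt_def s_gt0.
pose y := \sum_(i < m.+1) (t (lift ord0 i) / s) *: x (lift ord0 i).
have Ky : Kseq K m y.
  apply: IH; exists (fun i => t (lift ord0 i) / s), (fun i => x (lift ord0 i)).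
  split => //; first by move=> i; rewrite divr_ge0.
  by rewrite -mulr_suml mulfV.
exists (t ord0, (x ord0, y)).
  split; last by split; [exact: Kx|].
  by rewrite /= in_itv /= t0 /= -t1 lerDl.
rewrite /cmb /=; congr (_ + _).
have -> : 1 - t ord0 = s by rewrite -t1 addrC addKr.
rewrite scaler_sumr; apply: eq_bigr => i _.
by rewrite scalerA mulrC mulfVK.
Qed.

Lemma conv_comb K : convex_hull K `<=` [set P | exists m, comb K m P].
Proof.
apply: convex_hull_sub; last first.
  move=> x Kx; exists 1%N, (fun _ => 1), (fun _ => x); split => //.
    by rewrite big_ord1.
  by rewrite big_ord1 scale1r.
move=> P1 P2 w w0 w1 [m1 [t [x [t0 t1 Kx ->]]]] [m2 [s [y [s0 s1 Ky ->]]]].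
exists (m1 + m2)%N.
pose T i := match fintype.split i with inl a => w * t a | inr b => (1 - w) * s b end.
pose X i := match fintype.split i with inl a => x a | inr b => y b end.
exists T, X.
have sl i : fintype.split (lshift m2 i) = inl i := unsplitK (inl i).
have sr i : fintype.split (rshift m1 i) = inr i := unsplitK (inr i).
have Tl i : T (lshift m2 i) = w * t i by rewrite /T sl.
have Tr i : T (rshift m1 i) = (1 - w) * s i by rewrite /T sr.
have TXl i : T (lshift m2 i) *: X (lshift m2 i) = w *: (t i *: x i).
  by rewrite /T /X sl scalerA.
have TXr i : T (rshift m1 i) *: X (rshift m1 i) = (1 - w) *: (s i *: y i).
  by rewrite /T /X sr scalerA.
split.
- move=> i; rewrite /T; case: fintype.split => a; apply: mulr_ge0 => //; by rewrite subr_ge0.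
- rewrite big_split_ord (eq_bigr _ (fun i _ => Tl i)) (eq_bigr _ (fun i _ => Tr i)).
  by rewrite -!mulr_sumr t1 s1 !mulr1 /= addrC subrK.
- by move=> i; rewrite /X; case: fintype.split.
- rewrite big_split_ord (eq_bigr _ (fun i _ => TXl i)) (eq_bigr _ (fun i _ => TXr i)).
  by rewrite !scaler_sumr.
Qed.

End Kseq.

Section Cara.
Variables (R : realType) (V : normedModType R) (n : nat) (b : 'I_n -> V).
Hypothesis sp : forall x, exists c, phi b c = x.

Lemma aff_dep m (x : 'I_m -> V) : (n.+1 < m)%N ->
  exists u : 'I_m -> R, [/\ (exists i, u i != 0), \sum_i u i = 0 &
    \sum_i u i *: x i = 0].
Proof.
move=> nm.
have [co hco] := fin_all_exists (fun i => sp (x i)).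
pose X : 'M[R]_(m, n) := \matrix_(i, j) co i ord0 j.
pose M := row_mx X (const_mx 1 : 'M[R]_(m, 1)).
have nrf : ~~ row_free M.
  rewrite /row_free; apply/negP => /eqP h.
  have := rank_leq_col M; rewrite h addn1 => h'.
  by move: (leq_ltn_trans h' nm); rewrite ltnn.
have kn0 : kermx M != 0 by rewrite kermx_eq0.
have [i ri] : exists i, row i (kermx M) != 0.
  apply: contrapT => hn; move: kn0; apply/negP; rewrite negbK.
  apply/eqP/row_matrixP => i; rewrite row0.
  by apply/eqP; apply: contrapT => hi; apply: hn; exists i; apply/negP.
set u := row i (kermx M) in ri.
have uM : u *m M = 0 by rewrite /u -row_mul mulmx_ker row0.
move: uM; rewrite mul_mx_row -row_mx0 => /eq_row_mx [uX u1].
exists (fun k => u ord0 k); split.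
- apply: contrapT => hn; move: ri; apply/negP; rewrite negbK.
  apply/eqP/rowP => k; rewrite [in RHS]mxE.
  by apply/eqP; apply: contrapT => hk; apply: hn; exists k; apply/negP.
- have := congr1 (fun A : 'M[R]_1 => A ord0 ord0) u1; rewrite !mxE => h.
  rewrite -[RHS]h; apply: eq_bigr => k _; by rewrite [const_mx _ _ _]mxE mulr1.
- transitivity (\sum_(j < n) (u *m X) ord0 j *: b j); last first.
    by rewrite uX; apply: big1 => j _; rewrite mxE scale0r.
  under [RHS]eq_bigr do rewrite mxE scaler_suml.
  rewrite exchange_big /=; apply: eq_bigr => k _.
  rewrite -hco /phi scaler_sumr; apply: eq_bigr => j _.
  by rewrite !mxE scalerA.
Qed.

Lemma comb_reduce (K : set V) m P : (n.+1 < m.+1)%N ->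
  comb K m.+1 P -> comb K m P.
Proof.
move=> nm [t [x [t0 t1 Kx ->]]].
have [u [[i0 ui0] su sux]] := aff_dep x nm.
have [ip uip] : exists ip, 0 < u ip.
  apply: contrapT => hn.
  have hle i : 0 <= - u i.
    by rewrite oppr_ge0 leNgt; apply/negP => h; apply: hn; exists i.
  have : \sum_i - u i = 0 by rewrite sumrN su oppr0.
  move/(psumr_eq0P (fun i _ => hle i)) => /(_ i0 isT) /eqP.
  by rewrite oppr_eq0 (negbTE ui0).
case: (@arg_minP _ R _ ip (fun i => 0 < u i) (fun i => t i / u i) uip) => j uj jmin.
pose s := t j / u j.
have s0 : 0 <= s by rewrite divr_ge0 // ltW.
pose t2 i := t i - s * u i.
have t20 i : 0 <= t2 i.
  rewrite /t2 subr_ge0; have [ui0'|uile] := ltP 0 (u i).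
    by have := jmin i ui0'; rewrite -/s ler_pdivlMr.
  by apply: le_trans (t0 i); rewrite mulr_ge0_le0.
have t2j : t2 j = 0 by rewrite /t2 /s mulfVK ?subrr // gt_eqF.
have st2 : \sum_i t2 i = 1.
  by rewrite /t2 sumrB -mulr_sumr su mulr0 subr0.
have st2x : \sum_i t2 i *: x i = \sum_i t i *: x i.
  rewrite /t2; under eq_bigr do rewrite scalerBl -scalerA.
  by rewrite sumrB -scaler_sumr sux scaler0 subr0.
exists (fun k => t2 (lift j k)), (fun k => x (lift j k)); split.
- by move=> k; apply: t20.
- by move: st2; rewrite (bigD1_ord j) //= t2j add0r.
- by move=> k; apply: Kx.
- by rewrite -st2x (bigD1_ord j) //= t2j scale0r add0r.
Qed.

Lemma comb_Kn (K : set V) m P : comb K m P -> Kseq K n P.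
Proof.
elim/ltn_ind: m P => -[|m'] IH P hc.
  case: hc => t [x [_ t1 _ _]]; move: t1; rewrite big_ord0 => /eqP.
  by rewrite eq_sym oner_eq0.
have [le|lt] := leqP m' n.
  by apply: (Kseq_le le); apply: comb_Kseq.
apply: (IH m') => //; apply: comb_reduce => //.
Qed.

Lemma hull_compact (K : set V) : compact K -> compact (convex_hull K).
Proof.
move=> cK; have -> : convex_hull K = Kseq K n.
  apply/seteqP; split; last exact: Kseq_conv.
  by move=> P /conv_comb [m]; apply: comb_Kn.
exact: Kseq_compact.
Qed.

End Cara.


Lemma minkowski_compact (R : realType) (V : normedModType R) (A B : set V) :
  compact A -> compact B -> compact (minkowski_sum A B).
Proof.
move=> cA cB.
have -> : minkowski_sum A B = (fun p : V * V => p.1 + p.2) @` (A `*` B).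
  apply/seteqP; split => [z [x [y [Ax [By ->]]]]|z [[x y] [/= Ax By] <-]].
    by exists (x, y).
  by exists x, y.
apply: continuous_compact; first exact/continuous_subspaceT/add_continuous.
exact: compact_setX.
Qed.

Section Final.
Variables (R : realType) (V W : normedModType R)
  (ipV : V -> V -> R) (ipW : W -> W -> R) (lam : V -> W).
Hypotheses (hV : inner_product ipV) (hW : inner_product ipW)
  (hF : FTvN ipV ipW lam).

Lemma orbit_closed x : closed [set y | lam y = lam x].
Proof.
move=> y cy /=; apply: contrapT => hne.
have d0 : 0 < `|lam y - lam x| by rewrite normr_gt0 subr_eq0; apply/eqP.
have /cy [y' [hy' by']] : nbhs y (fun z => `|y - z| < `|lam y - lam x|).
  by apply/nbhs_nE; exists `|lam y - lam x|.
have := lam_lip hV hW hF y y'; rewrite /= in hy'; rewrite hy' => h.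
by move: (le_lt_trans h by'); rewrite ltxx.
Qed.

Lemma orbit_oclosed x : oclosed lam [set y | lam y = lam x].
Proof. by move=> y z /= -> . Qed.

Lemma orbit_compact x : finite_dim V -> compact [set y | lam y = lam x].
Proof.
move=> /basis_exists [n [b [sp indep]]].
apply: (HB_compact sp indep); first exact: orbit_closed.
by exists `|x| => y /= h; rewrite -(lam_norm hF y) h (lam_norm hF).
Qed.

Lemma hull_compactV (K : set V) : finite_dim V -> compact K ->
  compact (convex_hull K).
Proof.
move=> /basis_exists [n [b [sp indep]]]; exact: (hull_compact sp).
Qed.

Lemma conv_spec E : finite_dim V -> oclosed lam E -> oclosed lam (convex_hull E).
Proof.
move=> fd hE.
pose G := [set z | exists F : set V, [/\ F `<=` E, oclosed lam F, compact F &
  convex_hull F z]].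
have cG : convex_hull E `<=` G.
  apply: convex_hull_sub.
    move=> x y t t0 t1 [F1 [s1 o1 c1 h1]] [F2 [s2 o2 c2 h2]].
    exists (F1 `|` F2); split.
    - by move=> w [/s1|/s2].
    - by move=> u v [/o1 h|/o2 h] hv; [left|right]; apply: h.
    - exact: compactU.
    - apply: convex_hull_convex => //.
        by apply: (convex_hullS (E := F1)) => // w ?; left.
      by apply: (convex_hullS (E := F2)) => // w ?; right.
  move=> x Ex; exists [set y | lam y = lam x]; split.
  - by move=> y /= hy; apply: hE Ex hy.
  - exact: orbit_oclosed.
  - exact: orbit_compact.
  - by apply: sub_convex_hull.
move=> z z' /cG [F [sFE oF cF hz]] hz'.
apply: (convex_hullS sFE).
apply: (main_spec hV hW hF (C := convex_hull F) (z := z)) => //.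
- exact: convex_hull_convex.
- apply: SS0e; have := SS0_hull hV hF oF; exact.
- apply: proj_compact; first by exists z.
  exact: hull_compactV.
Qed.

Lemma conic_hull_cone (E : set V) : convex_cone (conic_hull E).
Proof.
move=> x y a b a0 b0 hx hy M [cM EM].
exact: cM (hx M (conj cM EM)) (hy M (conj cM EM)).
Qed.

Lemma cone_spec E : finite_dim V -> oclosed lam E -> oclosed lam (conic_hull E).
Proof.
move=> fd hE.
case: (pselect (E !=set0)) => [[e0 Ee0]|nE]; last first.
  move=> z z' hz; exfalso.
  have : conic_hull E `<=` set0.
    apply: smallest_sub; first by move=> ? ? ? ? ? ? [].
    by move=> x Ex; apply: nE; exists x.
  by move/(_ z hz).
have hcE := conv_spec fd hE.
pose D := [set w | exists t y, [/\ 0 <= t, convex_hull E y & w = t *: y]].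
have cC := @conic_hull_cone E.
have hDc : D `<=` conic_hull E.
  move=> _ [t [y [t0 hy ->]]].
  have : convex_hull E `<=` conic_hull E.
    apply: convex_hull_sub; last exact: sub_smallest.
    move=> u v r r0 r1 hu hv; apply: cC => //; by rewrite subr_ge0.
  move/(_ y hy) => hy'.
  have := cC y y t 0 t0 (lexx 0) hy' hy'; by rewrite scale0r addr0.
have hcD : conic_hull E `<=` D.
  apply: smallest_sub; last first.
    by move=> x Ex; exists 1, x; split => //; [exact: sub_convex_hull|rewrite scale1r].
  move=> _ _ a c a0 c0 [t1 [y1 [t10 hy1 ->]]] [t2 [y2 [t20 hy2 ->]]].
  rewrite !scalerA.
  have p1 : 0 <= a * t1 by rewrite mulr_ge0.
  have p2 : 0 <= c * t2 by rewrite mulr_ge0.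
  have [s0|sn0] := eqVneq (a * t1 + c * t2) 0.
    have e1 : a * t1 = 0 by apply/eqP; rewrite eq_le p1 andbT -s0 lerDl.
    have e2 : c * t2 = 0 by move: s0; rewrite e1 add0r.
    exists 0, e0; split => //; first exact: sub_convex_hull.
    by rewrite e1 e2 !scale0r addr0.
  have sp : 0 < a * t1 + c * t2 by rewrite lt_def sn0 addr_ge0.
  exists (a * t1 + c * t2), ((a * t1 / (a * t1 + c * t2)) *: y1 +
     (1 - a * t1 / (a * t1 + c * t2)) *: y2); split => //.
  - by rewrite ltW.
  - apply: convex_hull_convex => //; first by rewrite divr_ge0 // ltW.
    by rewrite ler_pdivrMr // mul1r lerDl.
  - have -> : 1 - a * t1 / (a * t1 + c * t2) = c * t2 / (a * t1 + c * t2).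
      by apply/eqP; rewrite subr_eq -mulrDl addrC divff.
    by rewrite scalerDr !scalerA; congr (_ *: _ + _ *: _); rewrite [RHS]mulrC divfK.
move=> z z' /hcD [t [y [t0 hy ->]]] hz'; apply: hDc.
have [tz|tn0] := eqVneq t 0.
  move: hz'; rewrite tz scale0r => /(lam_eq0 hF) ->.
  by exists 0, e0; split => //; [exact: sub_convex_hull|rewrite scale0r].
have tp : 0 < t by rewrite lt_def tn0 t0.
exists t, (t^-1 *: z'); split => //; last by rewrite scalerA divff // scale1r.
apply: (hcE y) => //.
rewrite (lamZ hV hW hF) ?invr_ge0 // hz' (lamZ hV hW hF) //.
by rewrite scalerA mulVf // scale1r.
Qed.

Lemma sum_spec A B : finite_dim V -> is_convex A -> oclosed lam A ->
  is_convex B -> oclosed lam B -> oclosed lam (minkowski_sum A B).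
Proof.
move=> fd cA oA cB oB _ z' [a [b' [Aa [Bb ->]]]] hz'.
pose K1 := convex_hull [set y | lam y = lam a].
pose K2 := convex_hull [set y | lam y = lam b'].
have K1A : K1 `<=` A.
  by apply: convex_hull_sub => // y /= hy; apply: oA Aa hy.
have K2B : K2 `<=` B.
  by apply: convex_hull_sub => // y /= hy; apply: oB Bb hy.
have hz : minkowski_sum K1 K2 (a + b').
  by exists a, b'; split; [exact: sub_convex_hull|split; [exact: sub_convex_hull|]].
have : minkowski_sum K1 K2 z'.
  apply: (main_spec hV hW hF (C := minkowski_sum K1 K2) (z := a + b')) => //.
  - by apply: minkowski_convex; apply: convex_hull_convex.
  - apply: SS0e; apply: (SS0_sum hV).
      have := SS0_hull hV hF (@orbit_oclosed a); exact.
    have := SS0_hull hV hF (@orbit_oclosed b'); exact.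
  - apply: proj_compact; first by exists (a + b').
    by apply: minkowski_compact; apply: hull_compactV => //; apply: orbit_compact.
move=> [x [y [Kx [Ky ->]]]]; exists x, y; split; first exact: K1A.
by split; [exact: K2B|].
Qed.

Lemma closure_hull_spec E : hilbert V -> oclosed lam E ->
  oclosed lam (closure (convex_hull E)).
Proof.
move=> hH hE z z' hz hz'.
apply: (main_spec hV hW hF (C := closure (convex_hull E)) (z := z)) => //.
- by apply: closure_convex; apply: convex_hull_convex.
- apply: (SSe_closure hV); apply: SS0e; have := SS0_hull hV hF hE; exact.
- apply: (proj_complete hV) => //; last by exists z.
  + exact: closed_closure.
  + by apply: closure_convex; apply: convex_hull_convex.
Qed.

Lemma sum_compact_spec A B : compact A -> is_convex A -> oclosed lam A ->
  compact B -> is_convex B -> oclosed lam B -> oclosed lam (minkowski_sum A B).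
Proof.
move=> kA cA oA kB cB oB z z' hz hz'.
apply: (main_spec hV hW hF (C := minkowski_sum A B) (z := z)) => //.
- exact: minkowski_convex.
- apply: SS0e; apply: (SS0_sum hV).
    have := SS0_oclosed hF oA; exact.
  have := SS0_oclosed hF oB; exact.
- apply: proj_compact; first by exists z.
  exact: minkowski_compact.
Qed.

End Final.

Unset Implicit Arguments. Set Strict Implicit.

Theorem proposition5p4 (R : realType) (V W : normedModType R)
  (ipV : V -> V -> R) (ipW : W -> W -> R) (lam : V -> W)
  (hV : inner_product ipV) (hW : inner_product ipW)
  (hF : FTvN ipV ipW lam) (E : set V) (hE : spectral lam E) :
  (* (a) *)
  [/\ spectral lam (closure E) /\ spectral lam (interior E)
        /\ spectral lam (boundary E),
  (* (b) *)
      (hilbert V -> spectral lam (closure (convex_hull E))),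
  (* (c) *)
      (finite_dim V -> spectral lam (convex_hull E) /\ spectral lam (conic_hull E)),
  (* (d) *)
      ((hilbert V -> spectral lam (polar ipV E)
         /\ forall S : set V, spectral lam S -> linear_subspace S ->
              spectral lam (orth ipV S)) /\
  (* (e) *)
      (hilbert V -> forall A B : set V,
         compact A -> is_convex A -> spectral lam A ->
         compact B -> is_convex B -> spectral lam B ->
         spectral lam (minkowski_sum A B)))
  & (* (f) *)
      (finite_dim V -> forall A B : set V,
         is_convex A -> spectral lam A -> is_convex B -> spectral lam B ->
         spectral lam (minkowski_sum A B))].
Proof.
move/spectralP: hE => hE; split.
- split; [|split]; apply/spectralP.
  + have := closure_oclosed hV hW hF hE; exact.
  + have := interior_oclosed hV hW hF hE; exact.
  + have := boundary_oclosed hV hW hF hE; exact.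
- move=> hH; apply/spectralP; have := closure_hull_spec hV hW hF hH hE; exact.
- move=> fd; split; apply/spectralP.
    have := conv_spec hV hW hF fd hE; exact.
  have := cone_spec hV hW hF fd hE; exact.
- split.
  + move=> hH; split; first by apply/spectralP; have := polar_oclosed hF hE; exact.
    move=> S /spectralP hS lS; apply/spectralP; have := orth_oclosed hV hF hS lS; exact.
  + move=> hH A B kA cA /spectralP oA kB cB /spectralP oB; apply/spectralP.
    have := sum_compact_spec hV hW hF kA cA oA kB cB oB; exact.
- move=> fd A B cA /spectralP oA cB /spectralP oB; apply/spectralP.
  have := sum_spec hV hW hF fd cA oA cB oB; exact.
Qed.
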